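(* Assume [LJ1]–[LJ4] and let $\ell>0$. For every $\varepsilon>0$ there exists $\eta=\eta(\varepsilon)>0$ such that for all $z\in\mathbb R$ $$F(z):=\inf_{a:\,|a-\min\{\ell,\gamma\}|\ge\varepsilon}\tfrac12\big(J_1(a)+J_1(2z-a)\big)+J_2(z)-(J_0^{**})'(\ell)(z-\ell)-J_0^{**}(\ell)\ \ge\ \eta.$$
   Context: Potentials: $J_1,J_2:\mathbb R\to(-\infty,+\infty]$; $J_{CB}:=J_1+J_2$; $J_0(z):=J_2(z)+\frac12\inf\{J_1(z_1)+J_1(z_2):z_1+z_2=2z\}$; $J_0^{**}$ is the convex lower semicontinuous envelope of $J_0$ (under the hypotheses below it is differentiable, and $(J_0^{**})'(\ell)$ denotes its derivative at $\ell$). Hypotheses: [LJ1] $\{z:J_0(z)=J_0^{**}(z)\}\cap\{z:J_0\text{ is affine in a neighbourhood of }z\}=\emptyset$. [LJ2] for every $z$ with $J_0(z)=J_0^{**}(z)$, the set $\{(z_1,z_2):z_1+z_2=2z,\ J_0(z)=J_2(z)+\frac12(J_1(z_1)+J_1(z_2))\}$ has exactly one element. [LJ3] $J_1,J_2$ are $C^{1,\alpha}$ on their domains for some $0<\alpha\le1$, $J_0$ is $C^1$ on its domain, $\operatorname{dom}J_1=\operatorname{dom}J_2\supset(0,+\infty)$, $\lim_{z\to+\infty}J_j(z)=0$ ($j=1,2$) and $\lim_{z\to+\infty}J_0(z)=:J_0(+\infty)\in\mathbb R$. [LJ4] there is a convex $\Psi:\mathbb R\to[0,+\infty]$ with $\lim_{z\to-\infty}\Psi(z)/|z|=+\infty$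 and constants $c_1,c_2>0$ with $c_1(\Psi(z)-1)\le J_j(z)\le c_2\max\{\Psi(z),|z|\}$ for all $z\in\mathbb R$, $j=1,2$; there are $\delta_1,\delta_2,\gamma>0$ with $\{\delta_j\}=\operatorname{argmin}J_j$ and $\{\gamma\}=\operatorname{argmin}J_0$; $J_j$ is strictly convex on $(-\infty,\delta_j)\cap\operatorname{dom}J_j$; $J_0(\gamma)<J_0(+\infty)$; and $J_0(z)=J_0^{**}(z)$ for all $z\le\gamma$. *)

(* Defs.v *)
From Stdlib Require Import Reals Lra ClassicalEpsilon.
Open Scope R_scope.

Inductive ER : Type := Fin (x : R) | PInf | MInf.

Definition ER_le (x y : ER) : Prop :=
  match x, y with
  | MInf, _ => True
  | _, PInf => True
  | Fin a, Fin b => a <= b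
  | _, _ => False
  end.

Definition ER_lt (x y : ER) : Prop := ER_le x y /\ x <> y.

(* addition; +oo absorbs (the case +oo + -oo never arises under the hypotheses) *)
Definition ER_plus (x y : ER) : ER :=
  match x, y with
  | PInf, _ | _, PInf => PInf
  | MInf, _ | _, MInf => MInf
  | Fin a, Fin b => Fin (a + b)
  end.

Definition ER_neg (x : ER) : ER :=
  match x with Fin a => Fin (- a) | PInf => MInf | MInf => PInf end.

(* multiplication by a scalar t (only used with t > 0) *)
Definition ER_scale (t : R) (x : ER) : ER :=
  match x with Fin a => Fin (t * a) | e => e end.

Definition ER_max (x y : ER) : ER :=
  match x, y with
  | PInf, _ | _, PInf => PInf
  | MInf, e | e, MInf => e
  | Fin a, Fin b => Fin (Rmax a b)
  end.

Definition ER_is_glb (P : ER -> Prop) (m : ER) : Prop :=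
  (forall v, P v -> ER_le m v) /\ (forall m', (forall v, P v -> ER_le m' v) -> ER_le m' m).
Definition ER_is_lub (P : ER -> Prop) (m : ER) : Prop :=
  (forall v, P v -> ER_le v m) /\ (forall m', (forall v, P v -> ER_le v m') -> ER_le m m').

Definition ER_inf (P : ER -> Prop) : ER := epsilon (inhabits PInf) (ER_is_glb P).
Definition ER_sup (P : ER -> Prop) : ER := epsilon (inhabits MInf) (ER_is_lub P).

Definition J0 (J1 J2 : R -> ER) (z : R) : ER :=
  ER_plus (J2 z)
    (ER_scale (1/2) (ER_inf (fun v => exists z1 z2, z1 + z2 = 2 * z /\
                                      v = ER_plus (J1 z1) (J1 z2)))).

(** Convex lower semicontinuous envelope f** (Fenchel biconjugate):
    supremum of all affine minorants of f. *)
Definition conv_env (f : R -> ER) (z : R) : ER :=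
  ER_sup (fun v => exists a b, (forall x, ER_le (Fin (a * x + b)) (f x)) /\
                                v = Fin (a * z + b)).

Definition in_dom (f : R -> ER) (z : R) : Prop := exists v, f z = Fin v.

(* real part (the value on the domain; 0 elsewhere, never used there) *)
Definition fin (f : R -> ER) (z : R) : R :=
  match f z with Fin v => v | _ => 0 end.

Definition diff_within (D : R -> Prop) (g : R -> R) (x l : R) : Prop :=
  forall eps, 0 < eps -> exists del, 0 < del /\
    forall y, D y -> y <> x -> Rabs (y - x) < del ->
      Rabs ((g y - g x) / (y - x) - l) < eps.

Definition cont_within (D : R -> Prop) (g : R -> R) (x : R) : Prop :=
  forall eps, 0 < eps -> exists del, 0 < del /\
    forall y, D y -> Rabs (y - x) < del -> Rabs (g y - g x) < eps.

Definition C1_on_dom (f : R -> ER) : Prop :=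
  exists g', (forall x, in_dom f x -> diff_within (in_dom f) (fin f) x (g' x)) /\
             (forall x, in_dom f x -> cont_within (in_dom f) g' x).

Definition C1alpha_on_dom (alpha : R) (f : R -> ER) : Prop :=
  exists g', (forall x, in_dom f x -> diff_within (in_dom f) (fin f) x (g' x)) /\
    (forall c d, (forall x, c <= x <= d -> in_dom f x) ->
       exists L, forall x y, c <= x <= d -> c <= y <= d -> x <> y ->
         Rabs (g' x - g' y) <= L * Rpower (Rabs (x - y)) alpha).

Definition affine_near (f : R -> ER) (z : R) : Prop :=
  exists del a b, 0 < del /\ forall x, Rabs (x - z) < del -> f x = Fin (a * x + b).

Definition ER_deriv (f : R -> ER) (x l : R) : Prop :=
  (exists del, 0 < del /\ forall y, Rabs (y - x) < del -> in_dom f y) /\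
  derivable_pt_lim (fin f) x l.

Definition is_argmin_singleton (f : R -> ER) (m : R) : Prop :=
  (forall z, ER_le (f m) (f z)) /\
  (forall z, (forall w, ER_le (f z) (f w)) -> z = m).

Definition strictly_convex_below (f : R -> ER) (d : R) : Prop :=
  forall x y vx vy t, x < d -> y < d -> f x = Fin vx -> f y = Fin vy -> x <> y ->
    0 < t < 1 -> ER_lt (f (t * x + (1 - t) * y)) (Fin (t * vx + (1 - t) * vy)).

Definition ER_convex (f : R -> ER) : Prop :=
  forall x y t, 0 < t < 1 ->
    ER_le (f (t * x + (1 - t) * y)) (ER_plus (ER_scale t (f x)) (ER_scale (1 - t) (f y))).

Definition lim_pinfty (f : R -> ER) (L : R) : Prop :=
  forall eps, 0 < eps -> exists M, forall z, M < z ->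
    exists v, f z = Fin v /\ Rabs (v - L) < eps.

Definition LJ1 (J1 J2 : R -> ER) : Prop :=
  forall z, J0 J1 J2 z = conv_env (J0 J1 J2) z -> ~ affine_near (J0 J1 J2) z.

Definition LJ2 (J1 J2 : R -> ER) : Prop :=
  forall z v, J0 J1 J2 z = Fin v -> conv_env (J0 J1 J2) z = Fin v ->
    exists z1 z2,
      (z1 + z2 = 2 * z /\
       J0 J1 J2 z = ER_plus (J2 z) (ER_scale (1/2) (ER_plus (J1 z1) (J1 z2)))) /\
      forall w1 w2, w1 + w2 = 2 * z ->
        J0 J1 J2 z = ER_plus (J2 z) (ER_scale (1/2) (ER_plus (J1 w1) (J1 w2))) ->
        w1 = z1 /\ w2 = z2.

Definition LJ3 (alpha J0inf : R) (J1 J2 : R -> ER) : Prop :=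
  0 < alpha <= 1 /\
  C1alpha_on_dom alpha J1 /\ C1alpha_on_dom alpha J2 /\
  C1_on_dom (J0 J1 J2) /\
  (forall z, in_dom J1 z <-> in_dom J2 z) /\
  (forall z, 0 < z -> in_dom J1 z) /\
  lim_pinfty J1 0 /\ lim_pinfty J2 0 /\
  lim_pinfty (J0 J1 J2) J0inf.

Definition LJ4 (Psi : R -> ER) (c1 c2 d1 d2 gamma J0inf : R) (J1 J2 : R -> ER) : Prop :=
  ER_convex Psi /\ (forall z, ER_le (Fin 0) (Psi z)) /\
  (forall K, exists M, forall z, z < M -> ER_le (Fin (K * Rabs z)) (Psi z)) /\
  0 < c1 /\ 0 < c2 /\
  (forall z, ER_le (ER_scale c1 (ER_plus (Psi z) (Fin (-1)))) (J1 z) /\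
             ER_le (J1 z) (ER_scale c2 (ER_max (Psi z) (Fin (Rabs z))))) /\
  (forall z, ER_le (ER_scale c1 (ER_plus (Psi z) (Fin (-1)))) (J2 z) /\
             ER_le (J2 z) (ER_scale c2 (ER_max (Psi z) (Fin (Rabs z))))) /\
  0 < d1 /\ 0 < d2 /\ 0 < gamma /\
  is_argmin_singleton J1 d1 /\ is_argmin_singleton J2 d2 /\
  is_argmin_singleton (J0 J1 J2) gamma /\
  strictly_convex_below J1 d1 /\ strictly_convex_below J2 d2 /\
  ER_lt (J0 J1 J2 gamma) (Fin J0inf) /\
  (forall z, z <= gamma -> J0 J1 J2 z = conv_env (J0 J1 J2) z).

(** F(z) from Lemma 4.1, with s = (J0** )'(l) *)
Definition Fl (J1 J2 : R -> ER) (gamma l s eps z : R) : ER :=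
  ER_plus
    (ER_inf (fun v => exists a, eps <= Rabs (a - Rmin l gamma) /\
                                v = ER_scale (1/2) (ER_plus (J1 a) (J1 (2 * z - a)))))
    (ER_plus (J2 z)
      (ER_plus (Fin (- (s * (z - l)))) (ER_neg (conv_env (J0 J1 J2) l)))).

(* Main.v *)
Require Import Defs.
From Stdlib Require Import Reals Lra Classical ClassicalEpsilon.
Open Scope R_scope.

Lemma ER_le_trans x y z : ER_le x y -> ER_le y z -> ER_le x z.
Proof. destruct x, y, z; simpl; intros; try tauto; lra. Qed.

Lemma ER_le_refl x : ER_le x x.
Proof. destruct x; simpl; auto; lra. Qed.

Lemma ER_le_antisym x y : ER_le x y -> ER_le y x -> x = y.
Proof. destruct x, y; simpl; intros; try tauto; try reflexivity. f_equal; lra. Qed.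

Lemma le_plus x x' y y' : ER_le x x' -> ER_le y y' -> ER_le (ER_plus x y) (ER_plus x' y').
Proof. destruct x, x', y, y'; simpl; intros; try tauto; lra. Qed.

Lemma le_scale t x y : 0 <= t -> ER_le x y -> ER_le (ER_scale t x) (ER_scale t y).
Proof. destruct x, y; simpl; intros; try tauto. apply Rmult_le_compat_l; auto. Qed.

Lemma plus_comm x y : ER_plus x y = ER_plus y x.
Proof. destruct x, y; simpl; auto. f_equal; ring. Qed.

Definition gtr (r : R) (x : ER) : Prop :=
  match x with Fin v => r < v | PInf => True | MInf => False end.

Lemma gtr_le r x : gtr r x -> ER_le (Fin r) x.
Proof. destruct x; simpl; auto; lra. Qed.

Lemma le_gtr r a x : r < a -> ER_le (Fin a) x -> gtr r x.
Proof. destruct x; simpl; auto; lra. Qed.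

Lemma gtr_plus_split r x y : x <> MInf -> y <> MInf -> gtr r (ER_plus x y) ->
  exists r1 r2, r = r1 + r2 /\ gtr r1 x /\ gtr r2 y.
Proof.
  destruct x as [a| |], y as [b| |]; simpl; intros H1 H2 H; try congruence.
  - exists (a - (a + b - r)/2), (b - (a+b-r)/2); simpl; repeat split; lra.
  - exists (a - 1), (r - (a - 1)); simpl; repeat split; lra.
  - exists (r - (b - 1)), (b - 1); simpl; repeat split; lra.
  - exists r, 0; simpl; repeat split; lra.
Qed.

Lemma gtr_scale r t x : 0 < t -> gtr r (ER_scale t x) -> gtr (r / t) x.
Proof.
  destruct x; simpl; auto. intros Ht H.
  apply (Rmult_lt_reg_l t); auto. field_simplify; lra.
Qed.

Lemma ER_glb_ex (P : ER -> Prop) : exists m, ER_is_glb P m.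
Proof.
  destruct (classic (P MInf)) as [HM|HM].
  { exists MInf; split; [intros v _; destruct v; simpl; auto|].
    intros m' Hm'. apply Hm'. auto. }
  destruct (classic (exists r, P (Fin r))) as [[r0 Hr0]|HF].
  - destruct (classic (exists lb, forall r, P (Fin r) -> lb <= r)) as [[lb Hlb]|Hnb].
    + set (E := fun x => P (Fin (- x))).
      assert (Hb : bound E). { exists (- lb). intros x Hx. specialize (Hlb _ Hx). lra. }
      assert (He : exists x, E x). { exists (- r0). unfold E. rewrite Ropp_involutive. auto. }
      destruct (completeness E Hb He) as [M [HM1 HM2]].
      exists (Fin (- M)). split.
      * intros v Hv. destruct v as [r| |]; [ | simpl; auto | contradiction ]; simpl.
        assert (E (- r)) by (unfold E; rewrite Ropp_involutive; auto).
        specialize (HM1 _ H). lra.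
      * intros m' Hm'. destruct m' as [q| |]; simpl; auto.
        -- assert (M <= - q); [|lra]. apply HM2. intros x Hx.
           specialize (Hm' _ Hx). simpl in Hm'. lra.
        -- specialize (Hm' _ Hr0). simpl in Hm'. auto.
    + exists MInf. split; [intros v _; destruct v; simpl; auto|].
      intros m' Hm'. destruct m' as [q| |]; simpl; auto.
      * apply Hnb. exists q. intros r Hr. specialize (Hm' _ Hr). simpl in Hm'. auto.
      * specialize (Hm' _ Hr0). simpl in Hm'. auto.
  - exists PInf. split.
    + intros v Hv. destruct v as [r| |]; simpl; auto.
      apply HF. exists r; auto.
    + intros m' _. destruct m'; simpl; auto.
Qed.

Lemma ER_lub_ex (P : ER -> Prop) : exists m, ER_is_lub P m.
Proof.
  destruct (classic (P PInf)) as [HM|HM].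
  { exists PInf; split; [intros v _; destruct v; simpl; auto|].
    intros m' Hm'. apply Hm'. auto. }
  destruct (classic (exists r, P (Fin r))) as [[r0 Hr0]|HF].
  - destruct (classic (exists ub, forall r, P (Fin r) -> r <= ub)) as [[ub Hub]|Hnb].
    + set (E := fun x => P (Fin x)).
      assert (Hb : bound E). { exists ub. intros x Hx. apply Hub; auto. }
      assert (He : exists x, E x). { exists r0. auto. }
      destruct (completeness E Hb He) as [M [HM1 HM2]].
      exists (Fin M). split.
      * intros v Hv. destruct v as [r| |]; [ | contradiction | simpl; auto ]; simpl.
        apply HM1; auto.
      * intros m' Hm'. destruct m' as [q| |]; simpl; auto.
        -- apply HM2. intros x Hx. specialize (Hm' _ Hx). simpl in Hm'. lra.
        -- specialize (Hm' _ Hr0). simpl in Hm'. auto.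
    + exists PInf. split; [intros v _; destruct v; simpl; auto|].
      intros m' Hm'. destruct m' as [q| |]; simpl; auto.
      * apply Hnb. exists q. intros r Hr. specialize (Hm' _ Hr). simpl in Hm'. auto.
      * specialize (Hm' _ Hr0). simpl in Hm'. auto.
  - exists MInf. split.
    + intros v Hv. destruct v as [r| |]; simpl; auto.
      apply HF. exists r; auto.
    + intros m' _. destruct m'; simpl; auto.
Qed.

Lemma ER_inf_spec P : ER_is_glb P (ER_inf P).
Proof. unfold ER_inf. apply epsilon_spec. apply ER_glb_ex. Qed.
Lemma ER_sup_spec P : ER_is_lub P (ER_sup P).
Proof. unfold ER_sup. apply epsilon_spec. apply ER_lub_ex. Qed.

Lemma ER_inf_le (P : ER -> Prop) v : P v -> ER_le (ER_inf P) v.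
Proof. intros. apply (proj1 (ER_inf_spec P)); auto. Qed.
Lemma ER_inf_ge (P : ER -> Prop) m : (forall v, P v -> ER_le m v) -> ER_le m (ER_inf P).
Proof. intros. apply (proj2 (ER_inf_spec P)); auto. Qed.
Lemma ER_sup_ge (P : ER -> Prop) v : P v -> ER_le v (ER_sup P).
Proof. intros. apply (proj1 (ER_sup_spec P)); auto. Qed.
Lemma ER_sup_le (P : ER -> Prop) m : (forall v, P v -> ER_le v m) -> ER_le (ER_sup P) m.
Proof. intros. apply (proj2 (ER_sup_spec P)); auto. Qed.

Definition Vs (J1 J2 : R -> ER) (a z : R) : ER :=
  ER_plus (J2 z) (ER_scale (1/2) (ER_plus (J1 a) (J1 (2*z - a)))).

Lemma J0_le_split J1 J2 z a : ER_le (J0 J1 J2 z) (Vs J1 J2 a z).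
Proof.
  unfold J0, Vs. apply le_plus; [apply ER_le_refl|].
  apply le_scale; [lra|]. apply ER_inf_le. exists a, (2*z - a). split; [ring|auto].
Qed.

Lemma conv_le f z : ER_le (conv_env f z) (f z).
Proof.
  unfold conv_env. apply ER_sup_le. intros v [a [b [H ->]]]. auto.
Qed.

Lemma conv_ge_affine f a b z : (forall x, ER_le (Fin (a*x+b)) (f x)) ->
  ER_le (Fin (a*z+b)) (conv_env f z).
Proof. intros H. unfold conv_env. apply ER_sup_ge. exists a, b. auto. Qed.

Lemma conv_comb f x1 x2 v1 v2 t : 0 <= t <= 1 -> conv_env f x1 = Fin v1 -> conv_env f x2 = Fin v2 ->
  ER_le (conv_env f (t*x1+(1-t)*x2)) (Fin (t*v1+(1-t)*v2)).
Proof.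
  intros Ht H1 H2. unfold conv_env at 1. apply ER_sup_le. intros v [a [b [H ->]]].
  simpl. pose proof (conv_ge_affine f a b x1 H) as E1. pose proof (conv_ge_affine f a b x2 H) as E2.
  rewrite H1 in E1. rewrite H2 in E2. simpl in E1, E2.
  assert (t*(a*x1+b) <= t*v1) by (apply Rmult_le_compat_l; lra).
  assert ((1-t)*(a*x2+b) <= (1-t)*v2) by (apply Rmult_le_compat_l; lra).
  nra.
Qed.

Lemma fin_eq f x v : f x = Fin v -> fin f x = v.
Proof. intros H. unfold fin. rewrite H. auto. Qed.

Lemma conv_tangent f l s c0 : conv_env f l = Fin c0 -> ER_deriv (conv_env f) l s ->
  forall z, ER_le (Fin (c0 + s*(z-l))) (conv_env f z).
Proof.
  intros Hc [[del [Hdel Hdom]] Hder] z.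
  destruct (Req_dec z l) as [->|Hzl].
  { rewrite Hc. simpl. lra. }
  destruct (conv_env f z) as [v| |] eqn:Ez.
  - simpl. apply Rnot_lt_le. intro Hlt.
    set (gap := c0 + s*(z-l) - v).
    assert (Hgap : 0 < gap) by (unfold gap; lra).
    assert (Hzl' : 0 < Rabs (z - l)) by (apply Rabs_pos_lt; lra).
    set (eps := gap / (2 * Rabs (z-l))).
    assert (Heps : 0 < eps) by (unfold eps; apply Rdiv_lt_0_compat; lra).
    destruct (Hder eps Heps) as [dl Hdl].
    pose proof (cond_pos dl) as Hdl0.
    set (t := Rmin (1/2) (Rmin dl del / (2 * Rabs (z-l)))).
    assert (Hmin : 0 < Rmin dl del) by (apply Rmin_pos; lra).
    assert (Ht0 : 0 < t). { unfold t. apply Rmin_pos; [lra|]. apply Rdiv_lt_0_compat; lra. }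
    assert (Ht1 : t <= 1/2) by (unfold t; apply Rmin_l).
    assert (Ht2 : t * (2 * Rabs (z-l)) <= Rmin dl del).
    { assert (t <= Rmin dl del / (2 * Rabs (z-l))) by (unfold t; apply Rmin_r).
      apply (Rmult_le_compat_r (2 * Rabs (z-l))) in H; [|lra].
      unfold Rdiv in H. rewrite Rmult_assoc, Rinv_l in H; lra. }
    set (h := t*(z-l)).
    assert (Hh : Rabs h = t * Rabs (z-l)).
    { unfold h. rewrite Rabs_mult, Rabs_right; lra. }
    assert (Hh0 : h <> 0). { unfold h. intro E. apply Rmult_integral in E. lra. }
    assert (Hmd : Rmin dl del <= dl) by apply Rmin_l.
    assert (Hme : Rmin dl del <= del) by apply Rmin_r.
    assert (Hhl : Rabs h < dl) by lra.
    assert (Hhd : Rabs ((l + h) - l) < del). { replace (l + h - l) with h by ring. lra. }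
    destruct (Hdom _ Hhd) as [w Ew].
    pose proof (conv_comb f z l v c0 t ltac:(lra) Ez Hc) as Hcc.
    replace (t*z + (1-t)*l) with (l + h) in Hcc by (unfold h; ring).
    rewrite Ew in Hcc. simpl in Hcc.
    specialize (Hdl h Hh0 Hhl).
    rewrite (fin_eq _ _ _ Ew), (fin_eq _ _ _ Hc) in Hdl.
    set (q := (w - c0)/h) in Hdl.
    assert (Hq : w - c0 = q * h) by (unfold q; field; auto).
    assert (Hq2 : q * (z - l) <= v - c0).
    { assert (t * (q * (z-l)) <= t * (v - c0)).
      { replace (t * (q * (z-l))) with (q*h) by (unfold h; ring). nra. }
      apply Rmult_le_reg_l in H; auto. }
    assert (Hq3 : (s - q) * (z - l) < gap / 2).
    { apply Rle_lt_trans with (Rabs ((s-q)*(z-l))); [apply Rle_abs|].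
      rewrite Rabs_mult. replace (gap/2) with (eps * Rabs (z-l)) by (unfold eps; field; lra).
      apply Rmult_lt_compat_r; auto. rewrite Rabs_minus_sym. auto. }
    unfold gap in Hq3. lra.
  - simpl. auto.
  - exfalso.
    destruct (classic (exists v, exists a b, (forall x, ER_le (Fin (a * x + b)) (f x)) /\ v = Fin (a * l + b))) as [[v [a [b [Hab _]]]]|Hn].
    + pose proof (conv_ge_affine f a b z Hab). rewrite Ez in H. simpl in H. auto.
    + assert (ER_le (conv_env f l) MInf).
      { unfold conv_env. apply ER_sup_le. intros v Hv. exfalso. apply Hn. exists v. auto. }
      rewrite Hc in H. simpl in H. auto.
Qed.

Definition lsc_at (J : R -> ER) (p : R) : Prop :=
  forall r, gtr r (J p) -> exists d, 0 < d /\ forall y, Rabs (y - p) < d -> ER_le (Fin r) (J y).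

Lemma lsc_in J g' p v : (forall x, in_dom J x -> diff_within (in_dom J) (fin J) x (g' x)) ->
  (forall x, J x <> MInf) -> J p = Fin v -> lsc_at J p.
Proof.
  intros Hd HM Hp r Hr. rewrite Hp in Hr. simpl in Hr.
  assert (Hin : in_dom J p) by (exists v; auto).
  destruct (Hd p Hin 1 ltac:(lra)) as [del [Hdel Hq]].
  set (k := Rabs (g' p) + 1).
  assert (Hk : 0 < k) by (unfold k; pose proof (Rabs_pos (g' p)); lra).
  exists (Rmin del ((v - r)/k)). split.
  { apply Rmin_pos; auto. apply Rdiv_lt_0_compat; lra. }
  intros y Hy.
  assert (Hy1 : Rabs (y - p) < del) by (eapply Rlt_le_trans; [exact Hy| apply Rmin_l]).
  assert (Hy2 : Rabs (y - p) < (v - r)/k) by (eapply Rlt_le_trans; [exact Hy| apply Rmin_r]).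
  destruct (J y) as [u| |] eqn:Ey; simpl; auto; [| exfalso; apply (HM y); auto].
  destruct (Req_dec y p) as [->|Hyp].
  { rewrite Hp in Ey. inversion Ey. lra. }
  assert (Hiny : in_dom J y) by (exists u; auto).
  specialize (Hq y Hiny Hyp Hy1).
  rewrite (fin_eq _ _ _ Ey), (fin_eq _ _ _ Hp) in Hq.
  set (q := (u - v)/(y - p)) in Hq.
  assert (Hq1 : u - v = q * (y - p)) by (unfold q; field; lra).
  assert (Hq2 : Rabs q < k).
  { unfold k. replace q with ((q - g' p) + g' p) by ring.
    eapply Rle_lt_trans; [apply Rabs_triang|]. lra. }
  assert (Hq3 : Rabs (u - v) <= k * Rabs (y - p)).
  { rewrite Hq1, Rabs_mult. apply Rmult_le_compat_r; [apply Rabs_pos|lra]. }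
  assert (k * Rabs (y - p) < v - r).
  { apply (Rmult_lt_compat_l k) in Hy2; auto. unfold Rdiv in Hy2.
    rewrite <- Rmult_assoc, (Rmult_comm k (v - r)), Rmult_assoc, Rinv_r in Hy2; lra. }

  assert (- (u - v) <= Rabs (u - v)) by (rewrite <- Rabs_Ropp; apply Rle_abs).
  lra.
Qed.

Lemma psi_fin_of_lower (Psi : R -> ER) c1 (J : ER) y u :
  0 < c1 -> ER_le (Fin 0) (Psi y) ->
  ER_le (ER_scale c1 (ER_plus (Psi y) (Fin (-1)))) J -> J = Fin u ->
  exists psi, Psi y = Fin psi /\ c1 * (psi - 1) <= u /\ 0 <= psi.
Proof.
  intros Hc H0 H HJ. subst J. destruct (Psi y) as [q| |]; simpl in *; try tauto.
  exists q. repeat split; auto; try (replace (q-1) with (q + -1) by ring; auto).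
Qed.

Lemma lsc_out (J1 J2 Psi : R -> ER) c1 c2 gamma l s c0 p :
  (forall z, J1 z <> MInf) -> (forall z, J2 z <> MInf) ->
  ER_convex Psi -> (forall z, ER_le (Fin 0) (Psi z)) -> 0 < c1 -> 0 < c2 ->
  (forall z, ER_le (ER_scale c1 (ER_plus (Psi z) (Fin (-1)))) (J1 z) /\
             ER_le (J1 z) (ER_scale c2 (ER_max (Psi z) (Fin (Rabs z))))) ->
  (forall z, ER_le (ER_scale c1 (ER_plus (Psi z) (Fin (-1)))) (J2 z) /\
             ER_le (J2 z) (ER_scale c2 (ER_max (Psi z) (Fin (Rabs z))))) ->
  (forall z, 0 < z -> in_dom J1 z) -> 0 < gamma ->
  (forall z, ER_le (Fin (c0 + s*(z-l))) (conv_env (J0 J1 J2) z)) ->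
  (forall z, z <= gamma -> J0 J1 J2 z = conv_env (J0 J1 J2) z) ->
  J1 p = PInf -> J2 p = PInf ->
  forall K, exists d, 0 < d /\ forall y, Rabs (y - p) < d ->
     ER_le (Fin K) (J1 y) /\ ER_le (Fin K) (J2 y).
Proof.
  intros HM1 HM2 Hconv Hpsi0 Hc1 Hc2 HB1 HB2 Hdom Hg Htan Hbelow Hp1 Hp2 K.
  assert (Hp0 : p <= 0).
  { destruct (Rle_lt_dec p 0); auto. destruct (Hdom p r) as [v Hv]. congruence. }
  assert (HPp : Psi p = PInf).
  { destruct (HB1 p) as [_ H]. rewrite Hp1 in H. destruct (Psi p); simpl in H; auto; tauto. }
  destruct (Hdom 1 ltac:(lra)) as [j1 Hj1].
  destruct (psi_fin_of_lower Psi c1 _ 1 j1 Hc1 (Hpsi0 1) (proj1 (HB1 1)) Hj1) as [psi1 [HP1 [_ Hpsi1]]].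
  apply NNPP. intro Hneg.
  set (B := K / c1 + 1).
  assert (Claim : forall d, 0 < d -> d <= 1 - p -> exists y psi, p < y < p + d /\ Psi y = Fin psi /\ psi <= B).
  { intros d Hd Hd1.
    apply NNPP; intro Hn. apply Hneg. exists d. split; auto. intros y Hy.
    apply NNPP; intro Hy2.
    assert (Hex : exists u, (J1 y = Fin u \/ J2 y = Fin u) /\ u < K /\
              exists psi, Psi y = Fin psi /\ c1 * (psi - 1) <= u /\ 0 <= psi).
    { destruct (classic (ER_le (Fin K) (J1 y))) as [H1|H1].
      - destruct (J2 y) as [u| |] eqn:E2; [| exfalso; apply Hy2; split; auto; simpl; auto | exfalso; apply (HM2 y); auto].
        exists u. split; [right; auto|]. split.
        + apply Rnot_le_lt. intro. apply Hy2. split; auto; simpl; auto.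
        + apply (psi_fin_of_lower Psi c1 (J2 y) y u Hc1 (Hpsi0 y) (proj1 (HB2 y)) E2).
      - destruct (J1 y) as [u| |] eqn:E1; [| simpl in H1; tauto | exfalso; apply (HM1 y); auto].
        exists u. split; [left; auto|]. split.
        + apply Rnot_le_lt. intro. apply H1. simpl. auto.
        + apply (psi_fin_of_lower Psi c1 (J1 y) y u Hc1 (Hpsi0 y) (proj1 (HB1 y)) E1). }
    destruct Hex as [u [HJ [Hu [psi [Hpsi [Hpsi2 Hpsi3]]]]]].
    assert (Hyp : y <> p). { intros ->. destruct HJ; congruence. }
    assert (Hpsi4 : psi <= B).
    { unfold B. assert (psi - 1 <= K / c1); [|lra].
      apply (Rmult_le_reg_l c1); auto. unfold Rdiv. rewrite <- Rmult_assoc, (Rmult_comm c1 K), Rmult_assoc, Rinv_r; lra. }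
    destruct (Rlt_le_dec y p) as [Hlt|Hge].
    -
      set (t := (1 - p) / (1 - y)).
      assert (Ht : 0 < t < 1).
      { unfold t. split; [apply Rdiv_lt_0_compat; lra|].
        apply (Rmult_lt_reg_r (1 - y)); [lra|]. unfold Rdiv. rewrite Rmult_assoc, Rinv_l; lra. }
      pose proof (Hconv y 1 t Ht) as Hc.
      replace (t * y + (1 - t) * 1) with p in Hc by (unfold t; field; lra).
      rewrite HPp, Hpsi, HP1 in Hc. simpl in Hc. auto.
    - apply Hn. exists y, psi. split; [|split; auto].
      split; [lra|]. pose proof (Rabs_def2 _ _ Hy). lra. }
  set (Bm := Rmax B psi1).
  assert (HBm0 : 0 <= Bm) by (unfold Bm; eapply Rle_trans; [exact Hpsi1| apply Rmax_r]).
  set (D := c2 * (Bm + 1 + Rabs p)).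
  assert (HJb : forall w, p < w <= 1 -> ER_le (J1 w) (Fin D) /\ ER_le (J2 w) (Fin D)).
  { intros w Hw.
    destruct (Claim (w - p) ltac:(lra) ltac:(lra)) as [y [psi [Hy [Hpsi Hpsi2]]]].
    assert (HPw : exists pw, Psi w = Fin pw /\ pw <= Bm).
    { destruct (Req_dec w 1) as [->|Hw1].
      { exists psi1. split; auto. unfold Bm. apply Rmax_r. }
      set (t := (1 - w) / (1 - y)).
      assert (Ht : 0 < t < 1).
      { unfold t. split; [apply Rdiv_lt_0_compat; lra|].
        apply (Rmult_lt_reg_r (1 - y)); [lra|]. unfold Rdiv. rewrite Rmult_assoc, Rinv_l; lra. }
      pose proof (Hconv y 1 t Ht) as Hc.
      replace (t * y + (1 - t) * 1) with w in Hc by (unfold t; field; lra).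
      rewrite Hpsi, HP1 in Hc. simpl in Hc.
      destruct (Psi w) as [pw| |] eqn:EPw; simpl in Hc; try tauto.
      - exists pw. split; auto.
        assert (psi <= Bm) by (unfold Bm; eapply Rle_trans; [exact Hpsi2| apply Rmax_l]).
        assert (psi1 <= Bm) by (unfold Bm; apply Rmax_r).
        nra.
      - exfalso. pose proof (Hpsi0 w) as H. rewrite EPw in H. simpl in H. auto. }
    destruct HPw as [pw [HPw Hpw]].
    assert (Hpw0 : 0 <= pw) by (pose proof (Hpsi0 w) as H; rewrite HPw in H; simpl in H; auto).
    assert (Hmx : Rmax pw (Rabs w) <= Bm + 1 + Rabs p).
    { apply Rmax_lub; [pose proof (Rabs_pos p); lra|].
      unfold Rabs. destruct (Rcase_abs w); destruct (Rcase_abs p); lra. }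
    assert (Hcmx : c2 * Rmax pw (Rabs w) <= D) by (unfold D; apply Rmult_le_compat_l; lra).
    split.
    - eapply ER_le_trans; [apply (proj2 (HB1 w))|]. rewrite HPw. simpl. auto.
    - eapply ER_le_trans; [apply (proj2 (HB2 w))|]. rewrite HPw. simpl. auto. }
  assert (HJ0 : forall w, p < w <= 1 -> ER_le (J0 J1 J2 w) (Fin (D + 1/2 * (D + D)))).
  { intros w Hw. eapply ER_le_trans; [apply (J0_le_split J1 J2 w w)|]. unfold Vs.
    replace (2 * w - w) with w by ring. destruct (HJb w Hw) as [H1 H2].
    change (Fin (D + 1/2 * (D + D))) with (ER_plus (Fin D) (ER_scale (1/2) (ER_plus (Fin D) (Fin D)))).
    apply le_plus; auto. apply le_scale; [lra|]. apply le_plus; auto. }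
  set (C := D + 1/2 * (D + D)).
  assert (Hcp : ER_le (conv_env (J0 J1 J2) p) (Fin C)).
  { unfold conv_env at 1. apply ER_sup_le. intros v [a [b [Hab ->]]]. simpl.
    apply Rnot_lt_le. intro Hlt.
    set (g := a * p + b - C).
    assert (Hgp : 0 < g) by (unfold g; lra).
    set (t := Rmin (1 - p) (g / (Rabs a + 1))).
    assert (Ha : 0 < Rabs a + 1) by (pose proof (Rabs_pos a); lra).
    assert (Ht0 : 0 < t) by (unfold t; apply Rmin_pos; [lra| apply Rdiv_lt_0_compat; lra]).
    assert (Ht1 : t <= 1 - p) by (unfold t; apply Rmin_l).
    assert (Ht2 : t * (Rabs a + 1) <= g).
    { assert (t <= g / (Rabs a + 1)) by (unfold t; apply Rmin_r).
      apply (Rmult_le_compat_r (Rabs a + 1)) in H; [|lra].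
      unfold Rdiv in H. rewrite Rmult_assoc, Rinv_l in H; lra. }
    pose proof (ER_le_trans _ _ _ (Hab (p + t)) (HJ0 (p + t) ltac:(lra))) as H. simpl in H.
    assert (- (Rabs a) * t <= a * t).
    { assert (- Rabs a <= a) by (rewrite <- Rabs_Ropp; pose proof (Rle_abs (-a)); lra). nra. }
    unfold g in Ht2. assert (t*(Rabs a+1) = Rabs a * t + t) by ring. assert (a*(p+t) = a*p + a*t) by ring. unfold C in *. lra. }
  pose proof (Htan p) as Hlow.
  destruct (conv_env (J0 J1 J2) p) as [r| |] eqn:Ecp; simpl in Hcp, Hlow; try tauto.
  pose proof (Hbelow p ltac:(lra)) as HJp. rewrite Ecp in HJp.
  unfold J0 in HJp. rewrite Hp2 in HJp. simpl in HJp. discriminate.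
Qed.

Lemma stepA J1 J2 gamma l s c0 z :
  LJ1 J1 J2 -> is_argmin_singleton (J0 J1 J2) gamma ->
  (forall z, z <= gamma -> J0 J1 J2 z = conv_env (J0 J1 J2) z) ->
  conv_env (J0 J1 J2) l = Fin c0 ->
  (forall z, ER_le (Fin (c0 + s*(z-l))) (conv_env (J0 J1 J2) z)) ->
  s <= 0 ->
  J0 J1 J2 z = Fin (c0 + s*(z-l)) -> conv_env (J0 J1 J2) z = Fin (c0 + s*(z-l)) ->
  z = Rmin l gamma.
Proof.
  intros HL1 [Hmin Huniq] Hbelow Hc Htan Hs HJz Hcz.
  destruct (Rlt_le_dec (Rmin z l) gamma) as [Hlt|Hge].
  - destruct (Req_dec z l) as [->|Hzl].
    + unfold Rmin in *. destruct (Rle_dec l l); [|lra]. destruct (Rle_dec l gamma); lra.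
    + exfalso.
      set (lo := Rmin z l). set (hi := Rmin (Rmax z l) gamma).
      assert (Hlohi : lo < hi).
      { unfold lo, hi, Rmin, Rmax in *. destruct (Rle_dec z l), (Rle_dec z l), (Rle_dec l gamma), (Rle_dec z gamma); lra. }
      set (w := (lo + hi)/2).
      apply (HL1 w).
      { apply Hbelow. unfold w. assert (hi <= gamma) by (unfold hi; apply Rmin_r). lra. }
      exists ((hi - lo)/2), s, (c0 - s*l). split; [lra|].
      intros x Hx. pose proof (Rabs_def2 _ _ Hx) as [Hx1 Hx2].
      assert (Hxl : lo < x < hi) by (unfold w in *; lra).
      assert (Hxg : x <= gamma) by (assert (hi <= gamma) by (unfold hi; apply Rmin_r); lra).
      rewrite (Hbelow x Hxg).
      assert (Hbet : (z < x < l) \/ (l < x < z)).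
      { unfold lo, hi, Rmin, Rmax in *. destruct (Rle_dec z l), (Rle_dec z gamma), (Rle_dec l gamma); lra. }
      set (t := (x - l)/(z - l)).
      assert (Htz : t * (z - l) = x - l) by (unfold t; field; lra).
      assert (Ht : 0 <= t <= 1) by (destruct Hbet; split; nra).
      pose proof (conv_comb _ z l _ _ t Ht Hcz Hc) as Hup.
      replace (t * z + (1 - t) * l) with x in Hup by nra.
      pose proof (Htan x) as Hlo.
      apply ER_le_antisym; [eapply ER_le_trans; [exact Hup|]|eapply ER_le_trans; [|exact Hlo]];
        simpl; nra.
  - assert (Hzg : gamma <= z) by (unfold Rmin in Hge; destruct (Rle_dec z l); lra).
    assert (Hlg : gamma <= l) by (unfold Rmin in Hge; destruct (Rle_dec z l); lra).
    assert (Hm : Rmin l gamma = gamma) by (apply Rmin_right; auto).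
    rewrite Hm. apply Huniq. intros w.
    eapply ER_le_trans; [|apply (Hmin w)].
    rewrite HJz. eapply ER_le_trans; [|apply conv_le].
    eapply ER_le_trans; [|apply (Htan gamma)]. simpl. nra.
Qed.

Lemma strict_pos J1 J2 gamma l s c0 eps :
  LJ1 J1 J2 -> LJ2 J1 J2 -> is_argmin_singleton (J0 J1 J2) gamma ->
  (forall z, z <= gamma -> J0 J1 J2 z = conv_env (J0 J1 J2) z) ->
  conv_env (J0 J1 J2) l = Fin c0 ->
  (forall z, ER_le (Fin (c0 + s*(z-l))) (conv_env (J0 J1 J2) z)) ->
  s <= 0 -> 0 < eps ->
  forall a z, eps <= Rabs (a - Rmin l gamma) -> gtr (c0 + s*(z-l)) (Vs J1 J2 a z).
Proof.
  intros HL1 HL2 Harg Hbelow Hc Htan Hs Heps a z Ha.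
  pose proof (ER_le_trans _ _ _ (Htan z) (conv_le _ z)) as H1.
  pose proof (J0_le_split J1 J2 z a) as H2.
  destruct (Vs J1 J2 a z) as [v| |] eqn:EV; simpl; auto.
  2:{ pose proof (ER_le_trans _ _ _ H1 H2). simpl in H. auto. }
  apply Rnot_le_lt. intro Hv.
  assert (HJz : J0 J1 J2 z = Fin (c0 + s*(z-l))).
  { apply ER_le_antisym; auto. eapply ER_le_trans; [exact H2|]. simpl; auto. }
  assert (Hcz : conv_env (J0 J1 J2) z = Fin (c0 + s*(z-l))).
  { apply ER_le_antisym; auto. rewrite <- HJz. apply conv_le. }
  pose proof (stepA J1 J2 gamma l s c0 z HL1 Harg Hbelow Hc Htan Hs HJz Hcz) as Hzm.
  assert (HV : J0 J1 J2 z = Vs J1 J2 a z).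
  { rewrite EV, HJz. f_equal. pose proof (ER_le_trans _ _ _ H1 H2). simpl in H. lra. }
  destruct (HL2 z _ HJz Hcz) as [z1 [z2 [_ Huq]]].
  destruct (Huq a (2*z - a) ltac:(ring) HV) as [E1 E2].
  assert (HV' : J0 J1 J2 z = ER_plus (J2 z) (ER_scale (1/2) (ER_plus (J1 (2*z-a)) (J1 (2*z - (2*z-a)))))).
  { rewrite HV. unfold Vs. replace (2*z - (2*z-a)) with a by ring. rewrite (plus_comm (J1 a)). auto. }
  destruct (Huq (2*z - a) (2*z - (2*z-a)) ltac:(ring) HV') as [E3 E4].
  assert (Haz : a - Rmin l gamma = 0) by (rewrite <- Hzm; lra).
  rewrite Haz, Rabs_R0 in Ha. lra.
Qed.

Lemma creep (H : R -> R -> Prop) a b : a <= b ->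
  (forall u v w, u <= v -> v <= w -> H u v -> H v w -> H u w) ->
  (forall x, a <= x <= b -> exists d, 0 < d /\ forall u v, x - d < u <= x -> x <= v < x + d -> H u v) ->
  H a b.
Proof.
  intros Hab Hglue Hloc.
  assert (Haa : H a a).
  { destruct (Hloc a ltac:(lra)) as [d [Hd Hd2]]. apply Hd2; lra. }
  set (E := fun t => a <= t <= b /\ H a t).
  assert (Hb : bound E) by (exists b; intros t [Ht _]; lra).
  assert (He : exists t, E t) by (exists a; split; [lra|auto]).
  destruct (completeness E Hb He) as [c [Hc1 Hc2]].
  assert (Hac : a <= c) by (apply Hc1; split; [lra|auto]).
  assert (Hcb : c <= b) by (apply Hc2; intros t [Ht _]; lra).
  destruct (Hloc c ltac:(lra)) as [d [Hd Hd2]].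
  assert (Ht : exists t, E t /\ c - d < t).
  { apply NNPP. intro Hn. assert (c <= c - d); [|lra]. apply Hc2. intros t Et.
    apply Rnot_lt_le. intro. apply Hn. exists t. auto. }
  destruct Ht as [t [[Ht1 Ht2] Ht3]].
  assert (Htc : t <= c) by (apply Hc1; split; auto).
  assert (Hv : forall v, c <= v < c + d -> H a v).
  { intros v Hv. apply (Hglue a t v); [lra|lra|exact Ht2|]. apply Hd2; lra. }
  destruct (Req_dec c b) as [<-|Hne].
  - apply Hv. lra.
  - exfalso. set (v := Rmin (c + d/2) b).
    assert (Hv1 : v <= c + d/2) by apply Rmin_l.
    assert (Hv2 : v <= b) by apply Rmin_r.
    assert (Hv3 : c < v) by (unfold v; apply Rmin_glb_lt; lra).
    assert (E v) by (split; [lra| apply Hv; lra]).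
    pose proof (Hc1 _ H0). lra.
Qed.

Lemma lsc_Vs J1 J2 a0 z0 r :
  (forall z, J1 z <> MInf) -> (forall z, J2 z <> MInf) ->
  (forall p, lsc_at J1 p) -> (forall p, lsc_at J2 p) ->
  gtr r (Vs J1 J2 a0 z0) ->
  exists d, 0 < d /\ forall a z, Rabs (a - a0) < d -> Rabs (z - z0) < d -> ER_le (Fin r) (Vs J1 J2 a z).
Proof.
  intros HM1 HM2 Hl1 Hl2 H. unfold Vs in H.
  assert (HMs : ER_scale (1/2) (ER_plus (J1 a0) (J1 (2*z0 - a0))) <> MInf).
  { pose proof (HM1 a0) as Ha. pose proof (HM1 (2*z0-a0)) as Hb.
    destruct (J1 a0), (J1 (2*z0-a0)); simpl; congruence. }
  destruct (gtr_plus_split _ _ _ (HM2 z0) HMs H) as [r2 [r' [Hr [H2 H']]]].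
  apply gtr_scale in H'; [|lra].
  destruct (gtr_plus_split _ _ _ (HM1 a0) (HM1 _) H') as [r1 [r3 [Hr' [H1 H3]]]].
  destruct (Hl2 _ _ H2) as [d2 [Hd2 Hd2']].
  destruct (Hl1 _ _ H1) as [d1 [Hd1 Hd1']].
  destruct (Hl1 _ _ H3) as [d3 [Hd3 Hd3']].
  exists (Rmin d2 (Rmin d1 (d3/3))). split.
  { repeat apply Rmin_pos; lra. }
  intros a z Ha Hz.
  assert (Hm1 : Rmin d2 (Rmin d1 (d3/3)) <= d2) by apply Rmin_l.
  assert (Hm2 : Rmin d2 (Rmin d1 (d3/3)) <= d1) by (eapply Rle_trans; [apply Rmin_r|apply Rmin_l]).
  assert (Hm3 : Rmin d2 (Rmin d1 (d3/3)) <= d3/3) by (eapply Rle_trans; [apply Rmin_r|apply Rmin_r]).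
  assert (E2 := Hd2' z ltac:(lra)).
  assert (E1 := Hd1' a ltac:(lra)).
  assert (E3 : ER_le (Fin r3) (J1 (2*z - a))).
  { apply Hd3'. replace (2*z - a - (2*z0 - a0)) with (2*(z - z0) - (a - a0)) by ring.
    eapply Rle_lt_trans; [apply Rabs_triang|]. rewrite Rabs_Ropp, Rabs_mult, Rabs_right; lra. }
  unfold Vs. replace r with (r2 + 1/2 * (r1 + r3)).
  2:{ rewrite Hr, <- Hr'. field. }
  change (Fin (r2 + 1/2 * (r1 + r3))) with (ER_plus (Fin r2) (ER_scale (1/2) (ER_plus (Fin r1) (Fin r3)))).
  apply le_plus; auto. apply le_scale; [lra|]. apply le_plus; auto.
Qed.

Lemma le_fin_mono y x V : ER_le (Fin x) V -> y <= x -> ER_le (Fin y) V.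
Proof. intros H Hy. eapply ER_le_trans; [|exact H]. simpl. auto. Qed.

Lemma box_pos J1 J2 l s c0 m eps A0 A1 Z0 Z1 :
  (forall z, J1 z <> MInf) -> (forall z, J2 z <> MInf) ->
  (forall p, lsc_at J1 p) -> (forall p, lsc_at J2 p) ->
  (forall a z, eps <= Rabs (a - m) -> gtr (c0 + s*(z-l)) (Vs J1 J2 a z)) ->
  0 < eps -> A0 <= A1 -> Z0 <= Z1 ->
  exists eta, 0 < eta /\ forall a z, A0 <= a <= A1 -> Z0 <= z <= Z1 -> eps <= Rabs (a - m) ->
    ER_le (Fin (c0 + s*(z-l) + eta)) (Vs J1 J2 a z).
Proof.
  intros HM1 HM2 Hl1 Hl2 Hpos Heps HA HZ.
  assert (loc2 : forall a0 z0, exists d eta, 0 < d /\ 0 < eta /\ forall a z, Rabs (a - a0) < d -> Rabs (z - z0) < d ->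
            eps <= Rabs (a - m) -> ER_le (Fin (c0 + s*(z-l) + eta)) (Vs J1 J2 a z)).
  { intros a0 z0. destruct (Rlt_le_dec (Rabs (a0 - m)) eps) as [Hlt|Hge].
    - exists (eps - Rabs (a0 - m)), 1. split; [lra|split;[lra|]]. intros a z Ha Hz Ham. exfalso.
      assert (Rabs (a - m) <= Rabs (a - a0) + Rabs (a0 - m)).
      { replace (a - m) with ((a - a0) + (a0 - m)) by ring. apply Rabs_triang. }
      lra.
    - pose proof (Hpos a0 z0 Hge) as Hg.
      assert (Hr : exists r, c0 + s*(z0-l) < r /\ gtr r (Vs J1 J2 a0 z0)).
      { destruct (Vs J1 J2 a0 z0) as [v| |]; simpl in Hg |- *; try tauto.
        - exists ((v + (c0 + s*(z0-l)))/2). split; lra.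
        - exists (c0 + s*(z0-l) + 1). split; [lra|auto]. }
      destruct Hr as [r [Hr1 Hr2]].
      destruct (lsc_Vs J1 J2 a0 z0 r HM1 HM2 Hl1 Hl2 Hr2) as [d [Hd Hd']].
      set (th := r - (c0 + s*(z0-l))).
      assert (Hs1 : 0 < Rabs s + 1) by (pose proof (Rabs_pos s); lra).
      exists (Rmin d (th / (2 * (Rabs s + 1)))), (th/2).
      split; [apply Rmin_pos; [lra| apply Rdiv_lt_0_compat; unfold th; lra]|].
      split; [unfold th; lra|].
      intros a z Ha Hz Ham.
      assert (Hz1 : Rabs (z - z0) < d) by (eapply Rlt_le_trans; [exact Hz|apply Rmin_l]).
      assert (Hz2 : Rabs (z - z0) < th / (2 * (Rabs s + 1))) by (eapply Rlt_le_trans; [exact Hz|apply Rmin_r]).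
      assert (Ha1 : Rabs (a - a0) < d) by (eapply Rlt_le_trans; [exact Ha|apply Rmin_l]).
      apply (le_fin_mono _ r); [apply Hd'; auto|].
      assert (Hsz : s * (z - z0) <= Rabs s * Rabs (z - z0)).
      { rewrite <- Rabs_mult. apply Rle_abs. }
      assert (Rabs s * Rabs (z - z0) <= th/2).
      { apply Rle_trans with ((Rabs s + 1) * Rabs (z - z0)).
        - pose proof (Rabs_pos (z - z0)). nra.
        - apply (Rmult_lt_compat_l (Rabs s + 1)) in Hz2; auto.
          replace ((Rabs s + 1) * (th / (2 * (Rabs s + 1)))) with (th/2) in Hz2 by (field; lra). lra. }
      unfold th in *. nra. }
  assert (inner : forall a0, exists d eta, 0 < d /\ 0 < eta /\ forall a z, Rabs (a - a0) < d -> Z0 <= z <= Z1 ->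
            eps <= Rabs (a - m) -> ER_le (Fin (c0 + s*(z-l) + eta)) (Vs J1 J2 a z)).
  { intros a0.
    set (H' := fun u v => exists d eta, 0 < d /\ 0 < eta /\ forall a z, Rabs (a - a0) < d -> u <= z <= v ->
            eps <= Rabs (a - m) -> ER_le (Fin (c0 + s*(z-l) + eta)) (Vs J1 J2 a z)).
    apply (creep H' Z0 Z1 HZ).
    - intros u v w Huv Hvw [d1 [e1 [Hd1 [He1 H1]]]] [d2 [e2 [Hd2 [He2 H2]]]].
      exists (Rmin d1 d2), (Rmin e1 e2). split; [apply Rmin_pos; lra|]. split; [apply Rmin_pos; lra|].
      intros a z Ha Hz Ham.
      destruct (Rle_dec z v).
      + apply (le_fin_mono _ (c0 + s*(z-l) + e1)); [apply H1; auto|].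
        * eapply Rlt_le_trans; [exact Ha|apply Rmin_l].
        * lra.
        * pose proof (Rmin_l e1 e2). lra.
      + apply (le_fin_mono _ (c0 + s*(z-l) + e2)); [apply H2; auto|].
        * eapply Rlt_le_trans; [exact Ha|apply Rmin_r].
        * lra.
        * pose proof (Rmin_r e1 e2). lra.
    - intros x Hx. destruct (loc2 a0 x) as [d [e [Hd [He Hde]]]].
      exists d. split; auto. intros u v Hu Hv. exists d, e. split; auto. split; auto.
      intros a z Ha Hz Ham. apply Hde; auto. apply Rabs_def1; lra. }
  set (H := fun u v => exists eta, 0 < eta /\ forall a z, u <= a <= v -> Z0 <= z <= Z1 -> eps <= Rabs (a - m) ->
    ER_le (Fin (c0 + s*(z-l) + eta)) (Vs J1 J2 a z)).
  apply (creep H A0 A1 HA).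
  - intros u v w Huv Hvw [e1 [He1 H1]] [e2 [He2 H2]].
    exists (Rmin e1 e2). split; [apply Rmin_pos; lra|].
    intros a z Ha Hz Ham. destruct (Rle_dec a v).
    + apply (le_fin_mono _ (c0 + s*(z-l) + e1)); [apply H1; auto; lra|].
      pose proof (Rmin_l e1 e2). lra.
    + apply (le_fin_mono _ (c0 + s*(z-l) + e2)); [apply H2; auto; lra|].
      pose proof (Rmin_r e1 e2). lra.
  - intros x Hx. destruct (inner x) as [d [e [Hd [He Hde]]]].
    exists d. split; auto. intros u v Hu Hv. exists e. split; auto.
    intros a z Ha Hz Ham. apply Hde; auto. apply Rabs_def1; lra.
Qed.

Lemma Vs_lb J1 J2 a z p q1 q2 :
  ER_le (Fin p) (J2 z) -> ER_le (Fin q1) (J1 a) -> ER_le (Fin q2) (J1 (2*z - a)) ->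
  ER_le (Fin (p + 1/2 * (q1 + q2))) (Vs J1 J2 a z).
Proof.
  intros H1 H2 H3. unfold Vs.
  change (Fin (p + 1/2 * (q1 + q2))) with (ER_plus (Fin p) (ER_scale (1/2) (ER_plus (Fin q1) (Fin q2)))).
  apply le_plus; auto. apply le_scale; [lra|]. apply le_plus; auto.
Qed.

Lemma lim_at (f : R -> ER) L e : lim_pinfty f L -> 0 < e -> exists M, forall z, M < z ->
  exists v, f z = Fin v /\ L - e < v < L + e.
Proof.
  intros H He. destruct (H e He) as [M HM]. exists M. intros z Hz.
  destruct (HM z Hz) as [v [Hv1 Hv2]]. exists v. split; auto.
  pose proof (Rabs_def2 _ _ Hv2). lra.
Qed.

Theorem lemma4p1 (J1 J2 : R -> ER)
  (alpha J0inf c1 c2 d1 d2 gamma : R) (Psi : R -> ER)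
  (HJ1 : forall z, J1 z <> MInf) (HJ2 : forall z, J2 z <> MInf)
  (HL1 : LJ1 J1 J2) (HL2 : LJ2 J1 J2) (HL3 : LJ3 alpha J0inf J1 J2)
  (HL4 : LJ4 Psi c1 c2 d1 d2 gamma J0inf J1 J2)
  (l s : R) (Hl : 0 < l) (Hs : ER_deriv (conv_env (J0 J1 J2)) l s) :
  forall eps, 0 < eps -> exists eta, 0 < eta /\
    forall z, ER_le (Fin eta) (Fl J1 J2 gamma l s eps z).
Proof.
  intros eps Heps.
  destruct HL3 as [Halpha [[g1 [Hg1 _]] [[g2 [Hg2 _]] [_ [Hdomeq [Hdom [Hlim1 [Hlim2 Hlim0]]]]]]]].
  destruct HL4 as [Hconv [Hpsi0 [Hsuper [Hc1 [Hc2 [HB1 [HB2 [Hd1 [Hd2 [Hgam [Harg1 [Harg2 [Harg0 [_ [_ [Hlt0 Hbelow]]]]]]]]]]]]]]]].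
  destruct (proj1 Hs) as [del [Hdel Hdl]].
  destruct (Hdl l ltac:(rewrite Rminus_diag, Rabs_R0; lra)) as [c0 Hc0].
  pose proof (conv_tangent _ _ _ _ Hc0 Hs) as Htan.
  assert (HLJ0 : forall z, ER_le (Fin (c0 + s*(z-l))) (J0 J1 J2 z)).
  { intros z. eapply ER_le_trans; [apply Htan|apply conv_le]. }
  assert (Hs0 : s <= 0).
  { apply Rnot_lt_le. intro Hsp.
    destruct (lim_at _ _ 1 Hlim0 ltac:(lra)) as [M HM].
    set (z := Rabs M + Rabs l + (Rabs J0inf + Rabs c0 + 2)/s + 1).
    assert (Hq : 0 <= (Rabs J0inf + Rabs c0 + 2)/s)
      by (apply Rlt_le, Rdiv_lt_0_compat; [pose proof (Rabs_pos J0inf); pose proof (Rabs_pos c0); lra| auto]).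
    assert (HzM : M < z) by (unfold z; pose proof (Rle_abs M); pose proof (Rabs_pos l); lra).
    destruct (HM z HzM) as [v [Hv1 Hv2]].
    pose proof (HLJ0 z) as H. rewrite Hv1 in H. simpl in H.
    assert (Hzl : (Rabs J0inf + Rabs c0 + 2)/s + 1 <= z - l)
      by (unfold z; pose proof (Rle_abs l); pose proof (Rabs_pos M); lra).
    assert (s * ((Rabs J0inf + Rabs c0 + 2)/s) = Rabs J0inf + Rabs c0 + 2) by (field; lra).
    assert (s * ((Rabs J0inf + Rabs c0 + 2)/s + 1) <= s * (z - l)) by (apply Rmult_le_compat_l; lra).
    pose proof (Rle_abs J0inf). pose proof (Rle_abs c0). pose proof (Rle_abs (-c0)). rewrite Rabs_Ropp in *.
    nra. }
  destruct (Hdom d1 Hd1) as [m1 Hm1].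
  destruct ((proj1 (Hdomeq d2)) (Hdom d2 Hd2)) as [m2 Hm2].
  assert (HJ1m : forall z, ER_le (Fin m1) (J1 z)) by (intros z; rewrite <- Hm1; apply (proj1 Harg1)).
  assert (HJ2m : forall z, ER_le (Fin m2) (J2 z)) by (intros z; rewrite <- Hm2; apply (proj1 Harg2)).
  assert (Hg0 : exists g0, J0 J1 J2 gamma = Fin g0 /\ g0 < J0inf).
  { pose proof (HLJ0 gamma) as H. destruct Hlt0 as [Hle Hne].
    destruct (J0 J1 J2 gamma) as [g| |]; simpl in H, Hle; try tauto.
    exists g. split; auto. destruct Hle; auto. subst; tauto. }
  destruct Hg0 as [g0 [Hg0 Hg0l]].
  assert (Hinf : J0inf <= 1/2 * m1).
  { apply Rnot_lt_le. intro Hlt. set (e := (J0inf - 1/2*m1)/3).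
    assert (He : 0 < e) by (unfold e; lra).
    destruct (lim_at _ _ e Hlim0 He) as [M0 HM0].
    destruct (lim_at _ _ e Hlim1 He) as [M1 HM1].
    destruct (lim_at _ _ e Hlim2 He) as [M2 HM2].
    set (z := Rabs M0 + Rabs M1 + Rabs M2 + Rabs d1 + 1).
    pose proof (Rle_abs M0). pose proof (Rle_abs M1). pose proof (Rle_abs M2).
    pose proof (Rle_abs d1). pose proof (Rabs_pos M0). pose proof (Rabs_pos M1).
    pose proof (Rabs_pos M2). pose proof (Rabs_pos d1).
    destruct (HM0 z ltac:(unfold z; lra)) as [v0 [Ev0 Hv0]].
    destruct (HM1 (2*z - d1) ltac:(unfold z; lra)) as [v1 [Ev1 Hv1]].
    destruct (HM2 z ltac:(unfold z; lra)) as [v2 [Ev2 Hv2]].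
    pose proof (J0_le_split J1 J2 z d1) as HH. unfold Vs in HH.
    rewrite Ev0, Ev2, Hm1, Ev1 in HH. simpl in HH. unfold e in *. lra. }
  assert (Hlsc : forall p, lsc_at J1 p /\ lsc_at J2 p).
  { intros p. destruct (J1 p) as [v| |] eqn:E1.
    - assert (Hin2 : in_dom J2 p) by (apply Hdomeq; exists v; auto).
      destruct Hin2 as [v2 E2].
      split; [apply (lsc_in J1 g1 p v); auto| apply (lsc_in J2 g2 p v2); auto].
    - assert (E2 : J2 p = PInf).
      { destruct (J2 p) as [v| |] eqn:E2; auto.
        - assert (in_dom J1 p) by (apply Hdomeq; exists v; auto). destruct H. congruence.
        - exfalso. apply (HJ2 p); auto. }
      pose proof (lsc_out J1 J2 Psi c1 c2 gamma l s c0 p HJ1 HJ2 Hconv Hpsi0 Hc1 Hc2 HB1 HB2 Hdom Hgam Htan Hbelow E1 E2) as H.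
      split; intros r _; destruct (H r) as [d [Hd Hd']]; exists d; split; auto; intros y Hy; apply Hd'; auto.
    - exfalso. apply (HJ1 p); auto. }
  pose proof (strict_pos J1 J2 gamma l s c0 eps HL1 HL2 Harg0 Hbelow Hc0 Htan Hs0 Heps) as Hpos.
  set (m := Rmin l gamma).
  set (kap := (J0inf - g0)/2).
  assert (Hkap : 0 < kap) by (unfold kap; lra).
  destruct (lim_at _ _ (kap/2) Hlim1 ltac:(lra)) as [M1 HM1].
  destruct (lim_at _ _ (kap/2) Hlim2 ltac:(lra)) as [M2 HM2].
  set (Z0 := Rabs gamma + Rabs M1 + Rabs M2 + 1).
  assert (HLg : c0 + s * (gamma - l) <= g0) by (pose proof (HLJ0 gamma) as H; rewrite Hg0 in H; auto).
  assert (Rfar : forall a z, Z0 <= z -> ER_le (Fin (c0 + s*(z-l) + kap)) (Vs J1 J2 a z)).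
  { intros a z Hz.
    pose proof (Rle_abs gamma). pose proof (Rle_abs M1). pose proof (Rle_abs M2).
    pose proof (Rabs_pos gamma). pose proof (Rabs_pos M1). pose proof (Rabs_pos M2).
    destruct (HM2 z ltac:(unfold Z0 in Hz; lra)) as [u2 [Eu2 Hu2]].
    assert (HLz : c0 + s*(z-l) <= g0).
    { assert (s * (z - l) <= s * (gamma - l)) by (apply Rmult_le_compat_neg_l; unfold Z0 in Hz; lra). lra. }
    destruct (Rle_dec z a) as [Hza|Hza].
    - destruct (HM1 a ltac:(unfold Z0 in Hz; lra)) as [u [Eu Hu]].
      apply (le_fin_mono _ (u2 + 1/2 * (u + m1))).
      + apply Vs_lb; [rewrite Eu2; simpl; lra| rewrite Eu; simpl; lra| apply HJ1m].
      + unfold kap in *. lra.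
    - destruct (HM1 (2*z - a) ltac:(unfold Z0 in Hz; lra)) as [u [Eu Hu]].
      apply (le_fin_mono _ (u2 + 1/2 * (m1 + u))).
      + apply Vs_lb; [rewrite Eu2; simpl; lra| apply HJ1m | rewrite Eu; simpl; lra].
      + unfold kap in *. lra. }
  set (K := 2 * (- s + 1) / c1).
  destruct (Hsuper K) as [MK HMK].
  set (U1 := c0 + (- s) * Rabs l + 1 - m2 - 1/2 * m1 + 1/2 * c1).
  set (U0 := Rmax U1 0 + Rabs MK + 1).
  assert (Rleft : forall a z, Rmin a (2*z - a) < - U0 -> ER_le (Fin (c0 + s*(z-l) + 1)) (Vs J1 J2 a z)).
  { intros a z Hu.
    set (u := Rmin a (2*z - a)) in Hu.
    assert (HU0 : U1 <= U0 /\ 0 <= U0 /\ - MK <= U0 - 1).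
    { unfold U0. pose proof (Rmax_l U1 0). pose proof (Rmax_r U1 0). pose proof (Rle_abs (- MK)). rewrite Rabs_Ropp in *.
      pose proof (Rabs_pos MK). lra. }
    assert (Huz : u <= z) by (unfold u, Rmin; destruct (Rle_dec a (2*z-a)); lra).
    assert (Hau : Rabs u = - u) by (apply Rabs_left; lra).
    assert (HJu : ER_le (Fin (c1 * (K * Rabs u + -1))) (J1 u)).
    { eapply ER_le_trans; [|apply (proj1 (HB1 u))].
      apply le_scale with (t := c1) (x := Fin (K * Rabs u + -1)); [lra|].
      change (Fin (K * Rabs u + -1)) with (ER_plus (Fin (K * Rabs u)) (Fin (-1))).
      apply le_plus; [apply HMK; lra| apply ER_le_refl]. }
    assert (HcK : c1 * K = 2 * (- s + 1)) by (unfold K; field; lra).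
    assert (HLz : s * (z - l) <= (- s) * (Rabs l + Rabs u)).
    { replace (s * (z - l)) with ((- s) * (l - z)) by ring. apply Rmult_le_compat_l; [lra|].
      pose proof (Rle_abs l). lra. }
    apply (le_fin_mono _ (m2 + 1/2 * (c1 * (K * Rabs u + -1) + m1))).
    - destruct (Rle_dec a (2*z - a)) as [Ha|Ha].
      + assert (Eu : u = a) by (unfold u; apply Rmin_left; lra). rewrite Eu in HJu |- *.
        apply Vs_lb; auto.
      + assert (Eu : u = 2*z - a) by (unfold u; apply Rmin_right; lra). rewrite Eu in HJu |- *.
        replace (m2 + 1/2 * (c1 * (K * Rabs (2*z - a) + -1) + m1))
          with (m2 + 1/2 * (m1 + c1 * (K * Rabs (2*z - a) + -1))) by ring.
        apply Vs_lb; auto.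
    - assert (c1 * (K * Rabs u + -1) = 2 * (-s + 1) * Rabs u - c1) by (rewrite <- HcK; ring).
      unfold U1 in HU0. nra. }
  assert (HZ0 : 0 <= Z0) by (unfold Z0; pose proof (Rabs_pos gamma); pose proof (Rabs_pos M1); pose proof (Rabs_pos M2); lra).
  assert (HU00 : 0 <= U0) by (unfold U0; pose proof (Rmax_r U1 0); pose proof (Rabs_pos MK); lra).
  destruct (box_pos J1 J2 l s c0 m eps (- U0) (2 * Z0 + U0) (- U0) Z0 HJ1 HJ2
             (fun p => proj1 (Hlsc p)) (fun p => proj2 (Hlsc p)) Hpos Heps ltac:(lra) ltac:(lra))
    as [eb [Heb Hbox]].
  set (eta := Rmin kap (Rmin 1 eb)).
  assert (Heta : 0 < eta) by (unfold eta; repeat apply Rmin_pos; lra).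
  assert (He1 : eta <= kap) by apply Rmin_l.
  assert (He2 : eta <= 1) by (eapply Rle_trans; [apply Rmin_r|apply Rmin_l]).
  assert (He3 : eta <= eb) by (eapply Rle_trans; [apply Rmin_r|apply Rmin_r]).
  assert (Glob : forall a z, eps <= Rabs (a - m) -> ER_le (Fin (c0 + s*(z-l) + eta)) (Vs J1 J2 a z)).
  { intros a z Ham.
    destruct (Rle_dec Z0 z) as [Hz|Hz].
    { eapply le_fin_mono; [apply Rfar; auto| lra]. }
    destruct (Rlt_dec (Rmin a (2*z - a)) (- U0)) as [Hu|Hu].
    { eapply le_fin_mono; [apply Rleft; auto| lra]. }
    assert (- U0 <= a /\ - U0 <= 2*z - a).
    { unfold Rmin in Hu; destruct (Rle_dec a (2*z-a)); lra. }
    eapply le_fin_mono; [apply Hbox; auto; lra| lra]. }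
  exists eta. split; auto. intros z.
  unfold Fl. rewrite Hc0. simpl ER_neg.
  destruct (J2 z) as [u2| |] eqn:E2.
  - assert (HI : ER_le (Fin (c0 + s*(z-l) + eta - u2))
        (ER_inf (fun v => exists a, eps <= Rabs (a - Rmin l gamma) /\
                                v = ER_scale (1/2) (ER_plus (J1 a) (J1 (2 * z - a)))))).
    { apply ER_inf_ge. intros v [a [Ha ->]].
      pose proof (Glob a z Ha) as G. unfold Vs in G. rewrite E2 in G.
      destruct (ER_scale (1/2) (ER_plus (J1 a) (J1 (2*z - a)))); simpl in G |- *; auto; lra. }
    eapply ER_le_trans; [|apply le_plus; [exact HI| apply ER_le_refl]].
    simpl. lra.
  - destruct (ER_inf _); simpl; auto.
  - exfalso. apply (HJ2 z); auto.
Qed.
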